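(* Let $M$ be a completely regular Hausdorff space. Then the Stone–Čech compactification $\beta M$ of $M$ is homeomorphic to the Gelfand spectrum of the abelian $C^\ast$-algebra $C^{pt}(\mathcal{Q}(\mathcal{T}(M)))$. If, in particular, $M$ is discrete, then $\beta M$ is homeomorphic to $\mathcal{Q}(\mathcal{T}(M))$.
   Context: $\mathcal{T}(M)$ is the lattice of open subsets of $M$. A quasipoint of $\mathcal{T}(M)$ is a maximal dual ideal (maximal nonempty family of open sets not containing $\emptyset$, upward closed and closed under finite intersections); $\mathcal{Q}(\mathcal{T}(M))$ is the set of quasipoints with topology having base $\{\mathfrak{B}\mid U\in\mathfrak{B}\}$, $U\in\mathcal{T}(M)$. $\mathfrak{B}$ is over $x\in M$ if $x\in\bigcap_{U\in\mathfrak{B}}\overline{U}$ (at most one such $x$ since $M$ is Hausdorff); $\mathcal{Q}^{pt}(\mathcal{T}(M))$ is the set of quasipoints over some point, and $pt:\mathcal{Q}^{pt}(\mathcal{T}(M))\to M$ sends a quasipoint over $x$ to $x$. $C^{pt}(\mathcal{Q}(\mathcal{T}(M)))$ is the $C^\ast$-algebra of continuous functions $\mathcal{Q}(\mathcal{T}(M))\to\mathbb{C}$ that are constant on each fibre of $pt$. *)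

(* Defs.v *)
From HB Require Import structures.
From mathcomp Require Import all_boot all_order all_algebra.
From mathcomp Require Import all_classical all_reals all_analysis.
From mathcomp Require Import complex.

Set Implicit Arguments.
Unset Strict Implicit.
Unset Printing Implicit Defensive.

Import Order.TTheory GRing.Theory Num.Theory.
Import numFieldNormedType.Exports.

Local Open Scope classical_set_scope.
Local Open Scope ring_scope.

Definition homeomorphic (X Y : topologicalType) : Prop :=
  exists (f : X -> Y) (g : Y -> X),
    [/\ continuous f, continuous g, cancel f g & cancel g f].

Definition discrete_top (X : topologicalType) : Prop :=
  forall A : set X, open A.

Definition stone_cech (M K : topologicalType) (e : M -> K) : Prop :=
  [/\ compact [set: K], hausdorff_space K,
      continuous e /\ injective e /\
      (forall U : set M, open U -> exists V : set K, open V /\ e @^-1` V = U),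
      dense (range e)
    & forall (L : topologicalType) (f : M -> L),
        compact [set: L] -> hausdorff_space L -> continuous f ->
        exists g : K -> L, continuous g /\ g \o e = f].

Section Quasipoints.
Variable M : topologicalType.

(** Dual ideals (filters) of the lattice T(M) of open subsets of M,
    not containing the bottom element (empty set). *)
Definition open_dual_ideal (F : set (set M)) : Prop :=
  [/\ (forall U, F U -> open U),
      F !=set0,
      ~ F set0,
      (forall U V, F U -> open V -> U `<=` V -> F V)
    & (forall U V, F U -> F V -> F (U `&` V))].

Definition quasipoint (F : set (set M)) : Prop :=
  open_dual_ideal F /\
  (forall G, open_dual_ideal G -> F `<=` G -> G = F).

Record QP := MkQP { qp_set :> set (set M); qp_ok : quasipoint qp_set }.

HB.instance Definition _ := gen_eqMixin QP.
HB.instance Definition _ := gen_choiceMixin QP.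

Definition qp_basic : set (set QP) :=
  [set S | exists U : set M, open U /\ S = [set B : QP | qp_set B U]].

HB.instance Definition _ :=
  isSubBaseTopological.Build QP qp_basic id.

Definition qp_over (B : QP) (x : M) : Prop :=
  forall U, qp_set B U -> closure U x.

End Quasipoints.

Section Spectrum.
Variables (R : realType) (M : topologicalType).
Local Notation C := (R[i])^o.
(** [(R[i])^o] is [R[i]] with its norm (Euclidean) topology. *)

(** Continuous functions Q(T(M)) -> C constant on each fibre of pt. *)
Record Cpt := MkCpt {
  cpt_fun :> QP M -> C;
  cpt_cont : continuous cpt_fun;
  cpt_fibre : forall (B1 B2 : QP M) (x : M),
      qp_over B1 x -> qp_over B2 x -> cpt_fun B1 = cpt_fun B2 }.

(** Characters of C^pt: nonzero multiplicative C-linear functionals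
    (operations of the algebra are pointwise). *)
Definition cpt_character (phi : Cpt -> C) : Prop :=
  [/\ (forall f g h : Cpt, (forall q, h q = f q + g q) -> phi h = phi f + phi g),
      (forall (c : C) (f h : Cpt), (forall q, h q = c * f q) -> phi h = c * phi f),
      (forall f g h : Cpt, (forall q, h q = f q * g q) -> phi h = phi f * phi g)
    & exists f : Cpt, phi f != 0].

Record Spec := MkSpec { spec_fun :> Cpt -> C; spec_ok : cpt_character spec_fun }.

HB.instance Definition _ := gen_eqMixin Spec.
HB.instance Definition _ := gen_choiceMixin Spec.

Definition spec_basic : set (set Spec) :=
  [set S | exists (f : Cpt) (W : set C), open W /\ S = [set phi : Spec | W (phi f)]].

HB.instance Definition _ :=
  isSubBaseTopological.Build Spec spec_basic id.

End Spectrum.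

(* Main.v *)
Require Import Defs.
From HB Require Import structures.
From mathcomp Require Import all_boot all_order all_algebra.
From mathcomp Require Import all_classical all_reals all_analysis.
From mathcomp Require Import complex.
Set Implicit Arguments.
Unset Strict Implicit.
Unset Printing Implicit Defensive.
Import Order.TTheory GRing.Theory Num.Theory.
Import numFieldNormedType.Exports.
Local Open Scope classical_set_scope.
Local Open Scope ring_scope.
Section QPbasics.
Variable M : topologicalType.
Implicit Types (B : QP M) (U V W : set M).

Lemma qp_odi B : open_dual_ideal B. Proof. by case: (qp_ok B). Qed.
Lemma qp_open B U : qp_set B U -> open U. Proof. by case: (qp_odi B) => H *; apply: H. Qed.
Lemma qp_n0 B : ~ qp_set B set0. Proof. by case: (qp_odi B). Qed.
Lemma qp_S B U V : qp_set B U -> open V -> U `<=` V -> qp_set B V.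
Proof. by case: (qp_odi B) => _ _ _ H _; apply: H. Qed.
Lemma qp_I B U V : qp_set B U -> qp_set B V -> qp_set B (U `&` V).
Proof. by case: (qp_odi B) => _ _ _ _ H; apply: H. Qed.
Lemma qp_T B : qp_set B setT.
Proof. case: (qp_odi B) => _ [U BU] _ _ _; apply: (qp_S BU) => //; exact: openT. Qed.
Lemma qp_ne B U : qp_set B U -> U !=set0.
Proof. by move=> BU; apply/set0P/eqP => U0; apply: (@qp_n0 B); rewrite -U0. Qed.

Lemma qp_max B V : open V -> (forall U, qp_set B U -> U `&` V !=set0) -> qp_set B V.
Proof.
move=> oV meet.
pose G := [set W | open W /\ exists U, qp_set B U /\ U `&` V `<=` W].
have odiG : open_dual_ideal G.
  split.
  - by move=> W [].
  - exists setT; split; first exact: openT.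
    by exists setT; split; [exact: qp_T|].
  - move=> [_ [U [BU sub]]]; have [x [Ux Vx]] := meet U BU.
    exact: (sub x).
  - move=> W W' [oW [U [BU sub]]] oW' WW'; split => //.
    by exists U; split => //; apply: subset_trans WW'.
  - move=> W W' [oW [U [BU sub]]] [oW' [U' [BU' sub']]]; split; first exact: openI.
    exists (U `&` U'); split; first exact: qp_I.
    by move=> x [[Ux U'x] Vx]; split; [apply: sub|apply: sub'].
have BG : (B : set (set M)) `<=` G.
  by move=> U BU; split; [exact: qp_open BU|exists U; split => // x []].
case: (qp_ok B) => _ /(_ G odiG BG) eqG.
have : G V by split => //; exists setT; split; [exact: qp_T|move=> x []].
by rewrite eqG.
Qed.

Lemma qp_disj B V : open V -> ~ qp_set B V -> exists U, qp_set B U /\ U `&` V = set0.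
Proof.
move=> oV nBV; apply: contrapT => H; apply: nBV; apply: qp_max => // U BU.
apply/set0P/negP => /eqP UV0; apply: H; by exists U.
Qed.

Lemma odi_ext (F : set (set M)) : open_dual_ideal F -> exists B : QP M, F `<=` qp_set B.
Proof.
move=> odiF.
pose P := [set G : set (set M) | G = set0 \/ (open_dual_ideal G /\ F `<=` G)].
have [A [PA Amax]] : exists A, P A /\ forall G, A `<` G -> ~ P G.
  apply: (@Zorn_bigcup _ P) => Fs FsP tot.
  have [allE|] := pselect (forall X, Fs X -> X = set0).
    left; apply/seteqP; split => // U [X FX XU]; by rewrite (allE X FX) in XU.
  move=> /existsNP [X0 /not_implyP [FX0 X0n0]].
  have [//|[odiX0 FX0s]] := FsP X0 FX0.
  right; split; last by move=> U FU; exists X0 => //; apply: FX0s.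
  split.
  - move=> U [X FX XU]; have [XE|[[+ _ _ _ _] _]] := FsP X FX; last by apply.
    by rewrite XE in XU.
  - by case: odiX0 => _ [U XU] _ _ _; exists U; exists X0.
  - move=> [X FX X0']; have [XE|[[_ _ + _ _] _]] := FsP X FX; last by apply.
    by rewrite XE in X0'.
  - move=> U V [X FX XU] oV UV; exists X => //.
    have [XE|[[_ _ _ + _] _]] := FsP X FX; last by move=> H; apply: (H U).
    by rewrite XE in XU.
  - move=> U V [X FX XU] [Y FY YV].
    have [XE|[odiX _]] := FsP X FX; first by rewrite XE in XU.
    have [YE|[odiY _]] := FsP Y FY; first by rewrite YE in YV.
    have [XY|YX] := tot X Y FX FY.
    + exists Y => //; case: odiY => _ _ _ _; apply => //; exact: XY.
    + exists X => //; case: odiX => _ _ _ _; apply => //; exact: YX.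
have [AE|[odiA FA]] := PA.
  exfalso; apply: (Amax F); last by rewrite /P; right; split.
  rewrite AE; split; first by [].
  move=> F0; case: odiF => _ [U FU] _ _ _; exact: (F0 U FU).
have qA : quasipoint A.
  split => // G odiG AG; apply: contrapT => GA.
  apply: (Amax G); last by rewrite /P; right; split => //; apply: subset_trans AG.
  split => //; move=> E; apply: GA; apply/seteqP; split => //.
by exists (MkQP qA).
Qed.


Definition qpO U : set (QP M) := [set B' | qp_set B' U].

Lemma qpO_open U : open U -> open (qpO U).
Proof.
move=> oU; exists [set qpO U].
  move=> _ ->; apply: finI_from1; by exists U.
by rewrite bigcup_set1.
Qed.

Lemma qp_nbhsP B (A : set (QP M)) :
  nbhs B A <-> exists U, qp_set B U /\ qpO U `<=` A.
Proof.
split; last first.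
  move=> [U [BU sA]]; rewrite nbhsE; exists (qpO U) => //; split => //.
  exact/qpO_open/(qp_open BU).
move=> H; unfold nbhs in H; simpl in H; unfold nbhs_of_open in H.
case: H => O [[D'' HD'' OE] OB OA].
rewrite -OE in OB; case: OB => i D''i iB.
have [D' HD' iE] := HD'' i D''i.
simpl in D', HD', iE, iB, D'', HD'', OE, i, D''i.
pose Phi := [set A' : set (QP M) | exists U, qp_set B U /\ qpO U `<=` A'].
have FPhi : Filter Phi.
  split.
  - by exists setT; split; [exact: qp_T|].
  - move=> A1 A2 [U1 [BU1 s1]] [U2 [BU2 s2]]; exists (U1 `&` U2); split; first exact: qp_I.
    move=> B' HB'; split; [apply: s1|apply: s2]; rewrite /qpO /=.
    + apply: (qp_S HB'); [exact: qp_open BU1|by move=> ? []].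
    + apply: (qp_S HB'); [exact: qp_open BU2|by move=> ? []].
  - by move=> A1 A2 s12 [U [BU s]]; exists U; split => //; apply: subset_trans s12.
have : Phi i.
  rewrite -iE; apply: filter_bigI => j jD; have /set_mem [U [oU jE]] := HD' j jD.
  exists U; split; last by rewrite jE.
  by move: iB; rewrite -iE => /(_ j jD); rewrite jE.
move=> [U [BU sU]]; exists U; split => //.
apply: (subset_trans sU); apply: (subset_trans _ OA); rewrite -OE.
by move=> B' HB'; exists i.
Qed.

Lemma qp_openP (A : set (QP M)) :
  (forall B, A B -> exists U, qp_set B U /\ qpO U `<=` A) -> open A.
Proof.
move=> H; rewrite openE => B AB; exact/qp_nbhsP/H.
Qed.

Lemma qp_over_nbhs B x : qp_over B x <-> (forall V, open V -> V x -> qp_set B V).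
Proof.
split.
  move=> ov V oV Vx; apply: qp_max => // U BU.
  by apply: (ov U BU); apply: open_nbhs_nbhs.
move=> H U BU W; rewrite nbhsE => -[V [oV Vx] VW].
have [y [Uy Vy]] := qp_ne (qp_I BU (H V oV Vx)).
by exists y; split => //; apply: VW.
Qed.

Lemma qp_point x O : open O -> (forall V, open V -> V x -> V `&` O !=set0) ->
  exists B : QP M, qp_set B O /\ qp_over B x.
Proof.
move=> oO meet.
pose F := [set W | open W /\ exists V, [/\ open V, V x & V `&` O `<=` W]].
have odiF : open_dual_ideal F.
  split.
  - by move=> W [].
  - by exists O; split => //; exists setT; split; [exact: openT|by []|by move=> ? []].
  - move=> [_ [V [oV Vx sub]]]; have [y Hy] := meet V oV Vx; exact: (sub y Hy).
  - move=> W W' [oW [V [oV Vx sub]]] oW' WW'; split => //.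
    by exists V; split => //; apply: subset_trans WW'.
  - move=> W W' [oW [V [oV Vx sub]]] [oW' [V' [oV' V'x sub']]]; split; first exact: openI.
    exists (V `&` V'); split => //; first exact: openI.
    by move=> y [[Vy V'y] Oy]; split; [apply: sub|apply: sub'].
have [B FB] := odi_ext odiF; exists B; split.
  by apply: FB; split => //; exists setT; split; [exact: openT|by []|by move=> ? []].
apply/qp_over_nbhs => V oV Vx; apply: (qp_S (U := V `&` O)).
- by apply: FB; split; [exact: openI|exists V; split].
- exact: oV.
- by move=> ? [].
Qed.

Lemma qp_point_ex x : exists B : QP M, qp_over B x.
Proof.
have [|B [_ ?]] := @qp_point x setT openT; last by exists B.
by move=> V _ Vx; exists x.
Qed.

Definition qs (x : M) : QP M := projT1 (cid (qp_point_ex x)).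
Lemma qs_over x : qp_over (qs x) x.
Proof. exact: (projT2 (cid (qp_point_ex x))). Qed.

Lemma qp_dense : dense (range qs).
Proof.
move=> A [B AB] oA.
have [U [BU sU]] : exists U, qp_set B U /\ qpO U `<=` A.
  by apply/qp_nbhsP; rewrite nbhsE; exists A.
have [x Ux] := qp_ne BU.
exists (qs x); split; last by exists x.
apply: sU; rewrite /qpO /=.
have := @qs_over x; move/qp_over_nbhs => H; apply: H; [exact: qp_open BU | exact: Ux].
Qed.

Lemma qp_compact : compact [set: QP M].
Proof.
rewrite compact_ultra => F UF _.
have PF : ProperFilter F by exact: ultra_proper.
pose F0 := [set U | open U /\ F (qpO U)].
have qpOS U V : open V -> U `<=` V -> qpO U `<=` qpO V.
  by move=> oV UV B' HB'; apply: (qp_S HB').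
have odiF0 : open_dual_ideal F0.
  split.
  - by move=> U [].
  - exists setT; split; first exact: openT.
    by apply: filterS filterT => B' _; exact: qp_T.
  - move=> [_ F0']; idtac.
    apply: (@filter_not_empty _ F PF); apply: (filterS _ F0') => B' /qp_n0 [].
  - move=> U V [oU FU] oV UV; split => //; apply: filterS FU; exact: qpOS.
  - move=> U V [oU FU] [oV FV]; split; first exact: openI.
    by apply: filterS (filterI FU FV) => B' [? ?]; exact: qp_I.
have qF0 : quasipoint F0.
  split => // G odiG F0G.
  apply/seteqP; split => // V GV.
  apply: contrapT => nF0V.
  have oV : open V by case: odiG => + _ _ _ _; apply.
  have nFV : ~ F (qpO V) by move=> H; apply: nF0V.
  pose W := \bigcup_(U in [set U | open U /\ U `&` V = set0]) U.
  have oW : open W by apply: bigcup_open => U [].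
  have FW : F (qpO W).
    have [//|FC] := in_ultra_setVsetC (qpO V) UF.
    apply: filterS FC => B' nB'V.
    have [U [B'U UV]] := qp_disj oV nB'V.
    apply: (qp_S B'U oW) => y Uy; exists U => //; split => //; exact: qp_open B'U.
  have GW : G W by apply: F0G.
  case: odiG => _ _ + _ GI; apply.
  have -> : (set0 : set M) = W `&` V.
    apply/seteqP; split => // y [[U [_ UV0] Uy] Vy].
    by have : (U `&` V) y by []; rewrite UV0.
  exact: GI.
exists (MkQP qF0); split => //.
move=> A /qp_nbhsP [U [[_ FU] sU]]; exact: filterS sU FU.
Qed.


Lemma qp_of_open U : open U -> U !=set0 -> exists B : QP M, qp_set B U.
Proof.
move=> oU [x Ux]; have [|B [BU _]] := @qp_point x U oU; last by exists B.
by move=> V _ Vx; exists x.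
Qed.

Lemma fibre_cont (Y : topologicalType) (regY : regular_space Y) (F : QP M -> Y) :
  continuous F ->
  (forall (B1 B2 : QP M) x, qp_over B1 x -> qp_over B2 x -> F B1 = F B2) ->
  continuous (F \o qs).
Proof.
move=> cF fib y W /= HW.
have [V nV cVW] := regY (F (qs y)) W HW.
apply: contrapT => nW.
pose G := F @^-1` (~` closure V).
have oG : open G.
  by apply: (proj1 (continuousP F) cF); rewrite openC; exact: closed_closure.
pose Fam := [set U | open U /\ qpO U `<=` G /\ exists z, ~ W (F (qs z)) /\ qp_set (qs z) U].
pose O := \bigcup_(U in Fam) U.
have oO : open O by apply: bigcup_open => U [].
have meet : forall N, open N -> N y -> N `&` O !=set0.
  move=> N oN Ny; apply: contrapT => nNO; apply: nW.
  rewrite nbhsE; exists N => //; move=> z Nz /=; apply: contrapT => nWz.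
  have Gz : G (qs z) by rewrite /G /=; move=> /cVW.
  have [U [zU sU]] := proj1 (qp_nbhsP _ _) (@open_nbhs_nbhs _ _ G (conj oG Gz)).
  have zN : qp_set (qs z) N := proj1 (qp_over_nbhs _ _) (@qs_over z) N oN Nz.
  have [p [Np Up]] := qp_ne (qp_I zN zU).
  apply: nNO; exists p; split => //; exists U => //; split; first exact: qp_open zU.
  by split => //; exists z.
have [Bs [BsO Bsy]] := qp_point oO meet.
have eqF : F Bs = F (qs y) by apply: (fib _ _ y) => //; exact: qs_over.
have : nbhs Bs (F @^-1` V) by apply: cF; rewrite eqF.
move=> /qp_nbhsP [W0 [BsW0 sW0]].
have [p [W0p [U [oU [sUG _]] Up]]] := qp_ne (qp_I BsW0 BsO).
have [B'' B''WU] := qp_of_open (openI (qp_open BsW0) oU) (ex_intro _ p (conj W0p Up)).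
have B''W0 : qp_set B'' W0 by apply: (qp_S B''WU); [exact: qp_open BsW0|move=> ? []].
have B''U : qp_set B'' U by apply: (qp_S B''WU) => //; move=> ? [].
have := sUG B'' B''U; rewrite /G /=; apply.
by apply: subset_closure; apply: sW0.
Qed.

End QPbasics.

Section SC.
Variables (M K : topologicalType) (e : M -> K).
Hypothesis sc : stone_cech e.

Let Kc : compact [set: K]. Proof. by case: sc. Qed.
Let KH : hausdorff_space K. Proof. by case: sc. Qed.
Let ec : continuous e. Proof. by case: sc => _ _ []. Qed.
Let ed : dense (range e). Proof. by case: sc. Qed.
Let univ : forall (L : topologicalType) (f : M -> L),
        compact [set: L] -> hausdorff_space L -> continuous f ->
        exists g : K -> L, continuous g /\ g \o e = f.
Proof. by case: sc. Qed.

Definition is_pi (B : QP M) (k : K) := forall U, qp_set B U -> closure (e @` U) k.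

Lemma pi_ex B : exists k, is_pi B k.
Proof.
pose F := filter_from (qp_set B) (fun U => e @` U).
have FF : ProperFilter F.
  apply: filter_from_proper; last first.
    by move=> U /qp_ne [x Ux]; exists (e x); exists x.
  apply: filter_from_filter; first by exists setT; exact: qp_T.
  move=> U V BU BV; exists (U `&` V); first exact: qp_I.
  by move=> _ [x [Ux Vx] <-]; split; exists x.
have [k [_ ck]] := Kc FF (filterT).
exists k => U BU W nW; apply: ck => //; by exists U.
Qed.

Lemma pi_uniq B k1 k2 : is_pi B k1 -> is_pi B k2 -> k1 = k2.
Proof.
move=> p1 p2; apply: contrapT => /eqP n12.
move: KH; rewrite open_hausdorff => /(_ _ _ n12) [[A1 A2] /= [/set_mem A1k /set_mem A2k]].
move=> [oA1 oA2 /eqP A12].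
have inB (A : set K) k : open A -> A k -> is_pi B k -> qp_set B (e @^-1` A).
  move=> oA Ak pk; apply: qp_max; first exact: (proj1 (continuousP e) ec).
  move=> U BU; have [_ [[x Ux <-] Aex]] := pk U BU A (open_nbhs_nbhs (conj oA Ak)).
  by exists x.
have := qp_ne (qp_I (inB _ _ oA1 A1k p1) (inB _ _ oA2 A2k p2)).
by move=> [x [H1 H2]]; have : (A1 `&` A2) (e x) by []; rewrite A12.
Qed.

Definition piq (B : QP M) : K := projT1 (cid (pi_ex B)).
Lemma piqP B : is_pi B (piq B). Proof. exact: (projT2 (cid (pi_ex B))). Qed.

Lemma pi_over B x : qp_over B x -> piq B = e x.
Proof.
move=> ov; suff H : is_pi B (e x) by exact: pi_uniq (@piqP B) H.
move=> U BU W nW.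
have := ov U BU (e @^-1` W) (ec nW).
by move=> [y [Uy Wy]]; exists (e y); split => //; exists y.
Qed.

Lemma pi_qs x : piq (qs x) = e x.
Proof. exact/pi_over/qs_over. Qed.

Lemma pi_surj k : exists B, piq B = k.
Proof.
pose F := [set U | open U /\ exists V, [/\ open V, V k & e @^-1` V `<=` U]].
have oe V : open V -> open (e @^-1` V) by move=> oV; exact: (proj1 (continuousP e) ec).
have odiF : open_dual_ideal F.
  split.
  - by move=> U [].
  - by exists setT; split; [exact: openT|exists setT; split => //; exact: openT].
  - move=> [_ [V [oV Vk sub]]].
    have [y [Vy [x _ ex]]] := ed (ex_intro _ k Vk) oV.
    by apply: (sub x); rewrite /= ex.
  - move=> U U' [oU [V [oV Vk sub]]] oU' UU'; split => //.
    by exists V; split => //; apply: subset_trans UU'.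
  - move=> U U' [oU [V [oV Vk sub]]] [oU' [V' [oV' V'k sub']]].
    split; first exact: openI.
    exists (V `&` V'); split => //; first exact: openI.
    by move=> x [Vx V'x]; split; [apply: sub|apply: sub'].
have [B FB] := odi_ext odiF; exists B.
suff H : is_pi B k by exact: pi_uniq (@piqP B) H.
move=> U BU W; rewrite nbhsE => -[V [oV Vk] VW].
have BV : qp_set B (e @^-1` V) by apply: FB; split; [exact: oe|exists V; split].
have [x [Ux Vx]] := qp_ne (qp_I BU BV).
by exists (e x); split; [exists x|apply: VW].
Qed.

Lemma pi_cont : continuous piq.
Proof.
move=> B W /= nW.
have [V nV cVW] := @compact_regular _ (piq B) setT KH Kc filterT W nW.
move: nV; rewrite nbhsE => -[V' [oV' V'k] V'V].
have BU : qp_set B (e @^-1` V').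
  apply: qp_max; first exact: (proj1 (continuousP e) ec).
  move=> U BU; have [_ [[x Ux <-] Vex]] := @piqP B U BU _ (open_nbhs_nbhs (conj oV' V'k)).
  by exists x.
apply/qp_nbhsP; exists (e @^-1` V'); split => // B' B'U.
apply: cVW; apply: (@closureS _ (e @` (e @^-1` V'))).
  by move=> _ [x Vx <-]; apply: V'V.
exact: (@piqP B' _ B'U).
Qed.


Lemma ext_real (R : realType) (f : M -> R) (r : R) : continuous f ->
  (forall x, `|f x| <= r) -> exists h : K -> R, continuous h /\ (forall x, h (e x) = f x).
Proof.
move=> cf bf.
pose L := one_point_compactification R.
have cL : compact [set: L] := one_point_compactification_compact.
have hL : hausdorff_space L.
  apply: one_point_compactification_hausdorff; [exact: locally_compactR|exact: Rhausdorff].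
have cSf : continuous ((Some : R -> L) \o f).
  move=> x; apply: continuous_comp; [exact: cf|exact: one_point_compactification_some_continuous].
have [g [cg ge]] := univ cL hL cSf.
pose S : set L := Some @` `[-r, r].
have clS : closed S.
  apply: compact_closed => //; apply: continuous_compact; last exact: segment_compact.
  apply: continuous_subspaceT; exact: one_point_compactification_some_continuous.
have gS : forall k, S (g k).
  move=> k; apply: contrapT => nS.
  have oC : open (g @^-1` (~` S)) by apply: (proj1 (continuousP g) cg); rewrite openC.
  have [z [nSy [x _ xz]]] := ed (ex_intro _ k nS) oC; subst z.
  apply: nSy; have -> : g (e x) = Some (f x) by rewrite -[g (e x)]/((g \o e) x) ge.
  exists (f x) => //; change (f x \in `[-r, r]); rewrite in_itv /=; rewrite -ler_norml; exact: bf.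
exists (fun k => odflt 0 (g k)); split; last first.
  by move=> x; rewrite -[g (e x)]/((g \o e) x) ge.
move=> k W /= nW.
have [y _ gky] := gS k.
have nSW : nbhs (g k) (Some @` W).
  rewrite -gky in nW *; exact: one_point_compactification_some_nbhs.
have H := cg k _ nSW; apply: (@filterS K (nbhs k) _ (g @^-1` (Some @` W))) H => k' /= [w Ww gw]; by rewrite -gw.
Qed.

End SC.


Lemma dense_eq (X Y : topologicalType) (f g : X -> Y) (D : set X) :
  hausdorff_space Y -> continuous f -> continuous g -> dense D ->
  (forall x, D x -> f x = g x) -> forall x, f x = g x.
Proof.
move=> hY cf cg dD fg x; apply: contrapT => /eqP nfg.
move: hY; rewrite open_hausdorff => /(_ _ _ nfg) [[A1 A2] /= [/set_mem A1f /set_mem A2g]].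
move=> [oA1 oA2 /eqP A12].
have oO : open (f @^-1` A1 `&` g @^-1` A2).
  by apply: openI; apply: (proj1 (continuousP _) _) => //.
have [y [[H1 H2] Dy]] := dD _ (ex_intro _ x (conj A1f A2g)) oO.
have : (A1 `&` A2) (f y) by split => //; rewrite fg.
by rewrite A12.
Qed.

Lemma homeo_of_bij (X Y : topologicalType) (f : X -> Y) :
  compact [set: X] -> hausdorff_space Y -> continuous f -> injective f ->
  (forall y, exists x, f x = y) ->
  exists g : Y -> X, [/\ continuous g, cancel f g & cancel g f].
Proof.
move=> cX hY cf inj surj.
pose g y := projT1 (cid (surj y)).
have gK : cancel g f by move=> y; exact: (projT2 (cid (surj y))).
have fK : cancel f g by move=> x; apply: inj; rewrite gK.
exists g; split => //.
apply/continuousP => A oA.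
have -> : g @^-1` A = ~` (f @` (~` A)).
  apply/seteqP; split => y.
    by move=> /= Agy [x nAx fxy]; apply: nAx; rewrite -fxy fK in Agy.
  move=> /= H; apply: contrapT => nA; apply: H; exists (g y) => //.
rewrite openC; apply: compact_closed => //.
apply: continuous_compact; first exact: continuous_subspaceT.
rewrite -(setTI (~` A)); apply: compact_closedI => //.
by rewrite closedC.
Qed.

Lemma closure_const (X Y : topologicalType) (h : X -> Y) (S : set X) (c : Y) p :
  hausdorff_space Y -> continuous h -> (forall s, S s -> h s = c) ->
  closure S p -> h p = c.
Proof.
move=> hY ch hc clp; apply: contrapT => /eqP nhc.
move: hY; rewrite open_hausdorff => /(_ _ _ nhc) [[A1 A2] /= [/set_mem A1f /set_mem A2g]].
move=> [oA1 oA2 /eqP A12].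
have [s [Ss Hs]] := clp _ (ch p _ (open_nbhs_nbhs (conj oA1 A1f))).
have : (A1 `&` A2) (h s) by split => //; rewrite hc.
by rewrite A12.
Qed.

Section ComplexCont.
Variable R : realType.
Local Notation C := ((R[i])^o).
Local Open Scope complex_scope.

Lemma near_id_C (z : C) (eps : R[i]) : 0 < eps -> \forall t \near nbhs z, `|z - t| < eps.
Proof.
move=> eps0; have : (fun t : C => t) @ nbhs z --> z by apply: cvg_id.
move/cvgrPdist_lt; apply; exact eps0.
Qed.

Lemma near_id_R (z : R) (eps : R) : 0 < eps -> \forall t \near nbhs z, `|z - t| < eps.
Proof.
move=> eps0; have : (fun t : R => t) @ nbhs z --> z by apply: cvg_id.
move/cvgrPdist_lt; apply; exact eps0.
Qed.

Lemma normC_Re (z : R[i]) : ((`|complex.Re z|)%:C : R[i]) <= `|z|.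
Proof.
rewrite normc_def lecR -sqrtr_sqr; apply: ler_wsqrtr.
by rewrite lerDl sqr_ge0.
Qed.

Lemma normC_Im (z : R[i]) : ((`|complex.Im z|)%:C : R[i]) <= `|z|.
Proof.
rewrite normc_def lecR -sqrtr_sqr; apply: ler_wsqrtr.
by rewrite lerDr sqr_ge0.
Qed.

Lemma normC_RC (x : R) : `|(x%:C : R[i])| = (`|x|)%:C.
Proof. by rewrite normc_def /= expr0n /= addr0 sqrtr_sqr. Qed.

Lemma ltC0 (x : R) : ((0 : R[i]) < x%:C) = (0 < x).
Proof. by rewrite ltcE /= eqxx. Qed.

Lemma Re_cont : continuous (fun z : C => complex.Re z).
Proof.
move=> z; apply/(@cvgrPdist_lt _ _ _ (nbhs z) (nbhs_filter z)) => eps eps0.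
have : \forall t \near nbhs z, `|z - t| < (eps%:C : C).
  by apply: near_id_C; rewrite ltC0.
apply: filterS => t /= H.
have := le_lt_trans (normC_Re (z - t)) H.
by case: z t {H} => a b [c d] /=; rewrite ltcR.
Qed.

Lemma Im_cont : continuous (fun z : C => complex.Im z).
Proof.
move=> z; apply/(@cvgrPdist_lt _ _ _ (nbhs z) (nbhs_filter z)) => eps eps0.
have : \forall t \near nbhs z, `|z - t| < (eps%:C : C).
  by apply: near_id_C; rewrite ltC0.
apply: filterS => t /= H.
have := le_lt_trans (normC_Im (z - t)) H.
by case: z t {H} => a b [c d] /=; rewrite ltcR.
Qed.

Lemma RC_cont : continuous (fun x : R => (x%:C : C)).
Proof.
move=> x; apply/(@cvgrPdist_lt _ _ _ (nbhs x) (nbhs_filter x)) => eps eps0.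
have : \forall t \near nbhs x, `|x - t| < complex.Re eps.
  apply: near_id_R.
  by move: eps0; rewrite ltcE /= => /andP [].
apply: filterS => t /= H.
have -> : (x%:C - t%:C : R[i]) = (x - t)%:C by rewrite rmorphB.
rewrite normC_RC; move: eps0; rewrite !ltcE /= => /andP [/eqP -> _].
by rewrite eqxx H.
Qed.

Lemma conj_cont : continuous (fun z : C => Num.conj (z : R[i])).
Proof.
move=> z; apply/(@cvgrPdist_lt _ _ _ (nbhs z) (nbhs_filter z)) => eps eps0.
have : \forall t \near nbhs z, `|z - t| < eps.
  exact: near_id_C.
apply: filterS => t /= H.
by rewrite -rmorphB norm_conjC.
Qed.

End ComplexCont.


Section Main.
Variables (R : realType) (M K : topologicalType) (e : M -> K).
Hypothesis sc : stone_cech e.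
Local Notation C := ((R[i])^o).
Local Open Scope complex_scope.

Lemma C_hausdorff : hausdorff_space C.
Proof. exact: norm_hausdorff. Qed.

Lemma bounded_cont (f : QP M -> R) : continuous f -> exists r, forall B, `|f B| <= r.
Proof.
move=> cf.
have cb := compact_bounded (continuous_compact (continuous_subspaceT cf) (@qp_compact M)).
case: cb => r0 [_ Hr0]; exists (r0 + 1) => B; apply: (Hr0 (r0 + 1)); first by rewrite ltrDl.
by exists B.
Qed.

Lemma cont_rect (T : topologicalType) (f g : T -> C) :
  continuous f -> continuous g -> continuous (fun k => f k + 'i * g k).
Proof.
move=> cf cg k.
have H2 : {for k, continuous (fun k => ('i : C) * g k)}.
  have := @continuousM _ _ (fun=> ('i : C)) g k (cvg_cst _) (cg k). exact.
have := @continuousD _ _ _ f (fun k => ('i : C) * g k) k (cf k) H2. exact.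
Qed.

Lemma cpt_ext (F : Cpt R M) : exists h : K -> C, continuous h /\ (forall B, h (piq sc B) = F B).
Proof.
have cF := @cpt_cont R M F.
have fib := @cpt_fibre R M F.
have cg : continuous (F \o qs (M:=M)) := fibre_cont uniform_regular cF fib.
have cRe : continuous (fun B => complex.Re (F B)).
  by move=> B; apply: continuous_comp; [exact: cF|exact: Re_cont].
have cIm : continuous (fun B => complex.Im (F B)).
  by move=> B; apply: continuous_comp; [exact: cF|exact: Im_cont].
have [r1 Hr1] := bounded_cont cRe.
have [r2 Hr2] := bounded_cont cIm.
have cgRe : continuous (fun x => complex.Re (F (qs x))).
  by move=> x; apply: (@continuous_comp _ _ _ (F \o qs (M:=M))); [exact: cg|exact: Re_cont].
have cgIm : continuous (fun x => complex.Im (F (qs x))).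
  by move=> x; apply: (@continuous_comp _ _ _ (F \o qs (M:=M))); [exact: cg|exact: Im_cont].
have [hr [chr hre]] := ext_real sc cgRe (fun x => Hr1 (qs x)).
have [hi [chi hie]] := ext_real sc cgIm (fun x => Hr2 (qs x)).
pose h := fun k => ((hr k)%:C + 'i%C * (hi k)%:C : C).
have ch : continuous h.
  apply: cont_rect => k; apply: continuous_comp.
  - exact: chr.
  - exact: RC_cont.
  - exact: chi.
  - exact: RC_cont.
have he : forall x, h (e x) = F (qs x).
  by move=> x; rewrite /h hre hie; exact: (esym (complexE _)).
exists h; split => //.
apply: (@dense_eq _ _ (h \o piq sc) F (range (qs (M:=M)))) => //.
- by move=> B; apply: continuous_comp; [exact: pi_cont|exact: ch].
- exact: qp_dense.
- by move=> _ [x _ <-]; rewrite /= pi_qs he.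
Qed.


Definition ext (F : Cpt R M) : K -> C := projT1 (cid (cpt_ext F)).
Lemma ext_cont F : continuous (ext F).
Proof. by case: (projT2 (cid (cpt_ext F))). Qed.
Lemma ext_pi F B : ext F (piq sc B) = F B.
Proof. by case: (projT2 (cid (cpt_ext F))) => _ H; exact: H. Qed.

Definition cptK (h : K -> C) (ch : continuous h) : Cpt R M.
Proof.
refine (@MkCpt R M (h \o piq sc) _ _).
- by move=> B; apply: continuous_comp; [exact: pi_cont|exact: ch].
- by move=> B1 B2 x o1 o2; rewrite /= (pi_over sc o1) (pi_over sc o2).
Defined.

Lemma cptKE h (ch : continuous h) B : cptK ch B = h (piq sc B).
Proof. by []. Qed.

Lemma ext_cptK h (ch : continuous h) k : ext (cptK ch) k = h k.
Proof. by have [B <-] := pi_surj sc k; rewrite ext_pi. Qed.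

Lemma Phi_char k : cpt_character (fun F : Cpt R M => ext F k).
Proof.
have [B <-] := pi_surj sc k; split.
- by move=> f g h H; rewrite !ext_pi; exact: H.
- by move=> c f h H; rewrite !ext_pi; exact: H.
- by move=> f g h H; rewrite !ext_pi; exact: H.
- by exists (cptK (@cst_continuous K C 1)); rewrite ext_pi /= oner_neq0.
Qed.

Definition Phi k : Spec R M := MkSpec (Phi_char k).

Definition specO (F : Cpt R M) (W : set C) : set (Spec R M) := [set phi | W (phi F)].

Lemma specO_open F W : open W -> open (specO F W).
Proof.
move=> oW; exists [set specO F W].
  move=> _ ->; apply: finI_from1; by exists F, W.
by rewrite bigcup_set1.
Qed.

Lemma Phi_cont : continuous Phi.
Proof.
move=> k A /= H; unfold nbhs in H; simpl in H; unfold nbhs_of_open in H.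
case: H => O [[D'' HD'' OE] OB OA]; rewrite -OE in OB; case: OB => i D''i iB.
have [D' HD' iE] := HD'' i D''i.
simpl in D', HD', iE, iB, D'', HD'', OE, i, D''i.
have : nbhs k (Phi @^-1` i).
  rewrite -iE preimage_bigcap; apply: filter_bigI => j jD.
  have /set_mem [F [W [oW jE]]] := HD' j jD.
  have Wk : W (ext F k) by move: iB; rewrite -iE => /(_ j jD); rewrite jE.
  rewrite jE; exact: (ext_cont (open_nbhs_nbhs (conj oW Wk))).
apply: filterS => k' /= ik'; apply: OA; rewrite -OE; by exists i.
Qed.


Lemma spec_eq (p1 p2 : Spec R M) : (forall F, p1 F = p2 F) -> p1 = p2.
Proof.
case: p1 p2 => f1 ok1 [f2 ok2] /= H; have E := funext H; subst f2.
by congr MkSpec; exact: Prop_irrelevance.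
Qed.

Lemma Spec_hausdorff : hausdorff_space (Spec R M).
Proof.
rewrite open_hausdorff => p1 p2 /eqP n12.
have [F nF] : exists F, p1 F != p2 F.
  apply: contrapT => H; apply: n12; apply: spec_eq => F.
  by apply: contrapT => /eqP nF; apply: H; exists F.
move: C_hausdorff; rewrite open_hausdorff => /(_ _ _ nF) [[A1 A2] /= [A1x A2y]] [oA1 oA2 /eqP A12].
exists (specO F A1, specO F A2) => /=.
  by split; apply/mem_set; [exact: (set_mem A1x)|exact: (set_mem A2y)].
split; [exact: specO_open|exact: specO_open|].
apply/eqP; apply/seteqP; split => // q [H1 H2].
by have : (A1 `&` A2) (q F) by []; rewrite A12.
Qed.

Lemma Phi_inj : injective Phi.
Proof.
move=> k1 k2 E; apply: contrapT => n12.
case: sc => Kc KH _ _ _.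
have crK : completely_regular_space K.
  exact: normal_completely_regular (compact_normal KH Kc) (hausdorff_accessible KH).
have := crK k1 [set k2] (@accessible_closed_set1 K (hausdorff_accessible KH) k2).
move=> /(_ (fun h => n12 h)) /(@uniform_separatorP _ R) [f [cf _ f0 f1]].
have ch : continuous (fun k => ((f k)%:C : C)).
  by move=> k; apply: continuous_comp; [exact: cf|exact: RC_cont].
have := congr1 (fun phi : Spec R M => spec_fun phi (cptK ch)) E.
rewrite /= !ext_cptK.
have -> : f k1 = 0 by apply: f0; exists k1.
have -> : f k2 = 1 by apply: f1; exists k2.
by move/complexI => /eqP; rewrite eq_sym oner_eq0.
Qed.


Lemma sq_cont (F : Cpt R M) : continuous (fun k => ext F k * Num.conj (ext F k) : C).
Proof.
move=> k; have := @continuousM _ _ (ext F) (fun k => Num.conj (ext F k)) k (@ext_cont F k).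
apply; apply: continuous_comp; [exact: ext_cont|exact: conj_cont].
Qed.

Lemma Phi_surj (phi : Spec R M) : exists k, Phi k = phi.
Proof.
case: sc => Kc KH _ _ _.
case: phi => p [padd pscal pmul [f0 pf0]].
pose one := cptK (@cst_continuous K C 1).
have p1nz : p one != 0.
  apply: contraNneq pf0 => p10; rewrite (pmul f0 one f0) ?p10 ?mulr0 //.
  by move=> q; rewrite /one cptKE mulr1.
have p1 : p one = 1.
  have := pmul one one one (fun q => esym (mulr1 _)).
  by move=> H; apply: (mulfI p1nz); rewrite mulr1 -H.
pose Z (F : Cpt R M) := [set k | ext F k = 0].
have Zcl F : closed (Z F).
  rewrite -openC; have -> : ~` Z F = ext F @^-1` (~` [set 0]) by [].
  apply: (proj1 (continuousP _) (@ext_cont F)); rewrite openC.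
  exact: (@accessible_closed_set1 C (hausdorff_accessible C_hausdorff) 0).
pose ker := [set F | p F = 0].
pose conjF (F : Cpt R M) := cptK (fun k => continuous_comp (@ext_cont F k) (@conj_cont R (ext F k))).
pose sqF (F : Cpt R M) := cptK (@sq_cont F).
have psq F : p (sqF F) = p F * p (conjF F).
  by apply: pmul => q; rewrite /sqF /conjF !cptKE /= ext_pi.
have Zsq F k : Z (sqF F) k <-> Z F k.
  rewrite /Z /= ext_cptK; split => [/eqP|->]; last by rewrite mul0r.
  by rewrite mul_conjC_eq0 => /eqP.
have sq_ge0 F k : 0 <= ext (sqF F) k by rewrite ext_cptK mul_conjC_ge0.
have key2 F G : ker F -> ker G -> exists H, ker H /\ Z H `<=` Z F `&` Z G.
  move=> kF kG.
  have cH : continuous (fun k => (ext (sqF F) k + ext (sqF G) k : C)).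
    by move=> k; apply: (@continuousD _ _ _ (ext (sqF F)) (ext (sqF G))); exact: ext_cont.
  exists (cptK cH); split.
    rewrite /ker /= (padd (sqF F) (sqF G)) ?psq ?kF ?kG ?mul0r ?addr0 //.
    by move=> q; rewrite cptKE !ext_pi.
  move=> k; rewrite /Z /= ext_cptK => /eqP.
  rewrite paddr_eq0 ?sq_ge0 // => /andP [/eqP H1 /eqP H2].
  by split; apply/Zsq.
have key3 F : ker F -> Z F !=set0.
  move=> kF; apply: contrapT => nZ.
  have nz k : ext (sqF F) k != 0.
    apply/eqP => H; apply: nZ; exists k; exact/Zsq.
  have cinv : continuous (fun k => (ext (sqF F) k)^-1 : C).
    by move=> k; apply: continuousV => //; exact: ext_cont.
  have := pmul (sqF F) (cptK cinv) one.
  rewrite psq kF mul0r p1 => H; have : (1 : C) = 0 * p (cptK cinv).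
    apply: H => q; have nzq := nz (piq sc q); rewrite (@ext_pi (sqF F)) in nzq.
    by rewrite [one q]cptKE [cptK cinv q]cptKE (@ext_pi (sqF F)) mulfV.
  by rewrite mul0r => /eqP; rewrite oner_eq0.
pose z0 := cptK (@cst_continuous K C 0).
have kz0 : ker z0.
  by rewrite /ker /= (pscal 0 f0 z0) ?mul0r // => q; rewrite /z0 cptKE mul0r.
pose Fz := filter_from ker Z.
have FFz : ProperFilter Fz.
  apply: filter_from_proper; last by move=> F kF; exact: key3.
  apply: filter_from_filter; first by exists z0.
  move=> F G kF kG; have [H [kH sH]] := key2 F G kF kG; by exists H.
have : [set: K] `&` cluster Fz !=set0 by apply: Kc; exact: filterT.
move=> [k0 [_ ck]].
have Zk F : ker F -> Z F k0.
  move=> kF; rewrite ((@closure_id K (Z F)).1 (Zcl F)).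
  move=> W nW; exact: (ck (Z F) W (ex_intro2 _ _ F kF (@subset_refl _ (Z F))) nW).
exists k0; apply: spec_eq => F /=.
pose cc := cptK (@cst_continuous K C (- p F)).
have pcc : p cc = - p F.
  by rewrite (pscal (- p F) one cc) ?p1 ?mulr1 // => q; rewrite /cc /one !cptKE mulr1.
have cG : continuous (fun k0 => (ext F k0 - p F : C)).
  move=> k0'; have := @continuousD _ _ _ (ext F) (fun=> - p F) k0' (@ext_cont F k0') (cvg_cst _).
  exact.
have kG : ker (cptK cG).
  rewrite /ker /= (padd F cc (cptK cG)) ?pcc ?subrr // => q.
  by rewrite /cc !cptKE ext_pi.
have := Zk _ kG; rewrite /Z /= ext_cptK => /eqP; rewrite subr_eq0 => /eqP.
exact.
Qed.

End Main.

Section Part2.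
Variables (R : realType) (M K : topologicalType) (e : M -> K).
Hypothesis sc : stone_cech e.

Lemma qp_eq (B1 B2 : QP M) : qp_set B1 = qp_set B2 -> B1 = B2.
Proof.
case: B1 B2 => f1 ok1 [f2 ok2] /= E; subst f2.
by congr MkQP; exact: Prop_irrelevance.
Qed.

Lemma piq_sep (dM : discrete_top M) (B1 B2 : QP M) V :
  qp_set B2 V -> ~ qp_set B1 V -> piq sc B1 <> piq sc B2.
Proof.
move=> B2V nB1V E.
have oV : open V := qp_open B2V.
have [U [B1U UV]] := qp_disj oV nB1V.
pose chi := fun x : M => if `[< U x >] then (1 : R) else 0.
have cchi : continuous chi by apply/continuousP => A _; exact: dM.
have bchi : forall x, `|chi x| <= 1.
  by move=> x; rewrite /chi; case: ifP => _; rewrite ?normr1 ?normr0.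
have [h [ch he]] := ext_real sc cchi bchi.
have h1 : h (piq sc B1) = 1.
  apply: (closure_const (@Rhausdorff R) ch _ (@piqP _ _ _ sc B1 U B1U)).
  move=> _ [x Ux <-]; rewrite he /chi; case: ifP => //; by move/negP; rewrite asboolE.
have h0 : h (piq sc B2) = 0.
  apply: (closure_const (@Rhausdorff R) ch _ (@piqP _ _ _ sc B2 V B2V)).
  move=> _ [x Vx <-]; rewrite he /chi; case: ifP => // /asboolP Ux.
  by have : (U `&` V) x by []; rewrite UV.
by move: h1; rewrite E h0 => /eqP; rewrite eq_sym oner_eq0.
Qed.

Lemma piq_inj (dM : discrete_top M) : injective (piq sc).
Proof.
move=> B1 B2 E; apply: qp_eq; apply/seteqP; split => V HV; apply: contrapT => nV.
- exact: (piq_sep dM HV nV (esym E)).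
- exact: (piq_sep dM HV nV E).
Qed.

End Part2.

Unset Implicit Arguments.
Set Strict Implicit.

Theorem corollary2p46 (R : realType) (M : topologicalType)
  (hM : hausdorff_space M) (crM : completely_regular_space M) :
  (forall (K : topologicalType) (e : M -> K),
      stone_cech e -> homeomorphic K (Spec R M))
  /\
  (discrete_top M ->
     forall (K : topologicalType) (e : M -> K),
       stone_cech e -> homeomorphic K (QP M)).
Proof.
split.
- move=> K e sc.
  have Kc : compact [set: K] by case: sc.
  have [g [cg gK Kg]] := homeo_of_bij Kc (@Spec_hausdorff R M) (@Phi_cont R M K e sc)
    (@Phi_inj R M K e sc) (@Phi_surj R M K e sc).
  rewrite /homeomorphic; exists (Phi R sc), g; split => //; exact: (@Phi_cont R M K e sc).
- move=> dM K e sc.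
  have KH : hausdorff_space K by case: sc.
  have [g [cg pg gp]] := homeo_of_bij (@qp_compact M) KH (@pi_cont M K e sc)
    (@piq_inj R M K e sc dM) (pi_surj sc).
  rewrite /homeomorphic; exists g, (piq sc); split => //; exact: (@pi_cont M K e sc).
Qed.
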